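(* The set of pixellated $\ell_1$-convex subsets of $\mathbb{R}^n$ is dense in the space of compact $\ell_1$-convex subsets of $\mathbb{R}^n$ with respect to the Hausdorff metric.
   Context: $Q_n=[-\tfrac12,\tfrac12]^n$ and $\mathbf{H}=\{m+\tfrac12:m\in\mathbb{Z}\}$. For $\lambda>0$, a subset of $\mathbb{R}^n$ is $\lambda$-pixellated if it is a finite union of cubes $\lambda(h+Q_n)$ with $h\in\mathbf{H}^n$; it is pixellated if it is $\lambda$-pixellated for some $\lambda>0$. A subset $Z\subseteq\mathbb{R}^n$ is $\ell_1$-convex if for all $z,z'\in Z$, with $D=\sum_i|z_i-z'_i|$, there is $\gamma\colon[0,D]\to Z$ with $\gamma(0)=z,\gamma(D)=z'$ and $\sum_i|\gamma_i(t)-\gamma_i(t')|=|t-t'|$ for all $t,t'$. The Hausdorff distance between compact sets $X,Y$ is $\inf\{\delta>0:X\subseteq Y+\delta B_n,\ Y\subseteq X+\delta B_n\}$ with $B_n$ the closed unit $\ell_1$ ball. *)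

(* Defs.v *)
From HB Require Import structures.
From mathcomp Require Import all_boot all_order all_algebra.
From mathcomp Require Import all_classical all_reals all_analysis.
Set Implicit Arguments. Unset Strict Implicit. Unset Printing Implicit Defensive.
Import Order.TTheory GRing.Theory Num.Theory.
Import numFieldNormedType.Exports.
Local Open Scope classical_set_scope.
Local Open Scope ring_scope.

Section Defs.
Variables (R : realType) (n : nat).
Notation pt := 'rV[R]_n.

Definition l1dist (x y : pt) : R := \sum_(i < n) `|x 0 i - y 0 i|.

Definition Hhalf : set R := [set x | exists m : int, x = m%:~R + 2^-1].

Definition Qcube : set pt := [set q | forall i : 'I_n, `|q 0 i| <= 2^-1].

Definition pixel (lam : R) (h : pt) : set pt :=
  [set lam *: (h + q) | q in Qcube].

Definition lam_pixellated (lam : R) (S : set pt) : Prop :=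
  exists s : seq pt,
    (forall h, h \in s -> forall i : 'I_n, Hhalf (h 0 i)) /\
    S = [set x | exists2 h, h \in s & pixel lam h x].

Definition pixellated (S : set pt) : Prop :=
  exists2 lam : R, 0 < lam & lam_pixellated lam S.

Definition l1_convex (Z : set pt) : Prop :=
  forall z z', Z z -> Z z' ->
    let D := l1dist z z' in
    exists gamma : R -> pt,
      [/\ gamma 0 = z, gamma D = z',
          (forall t, 0 <= t <= D -> Z (gamma t)) &
          (forall t t', 0 <= t <= D -> 0 <= t' <= D ->
              l1dist (gamma t) (gamma t') = `|t - t'|)].

Definition l1ball : set pt := [set b | l1dist b 0 <= 1].

Definition l1nbhd (X : set pt) (delta : R) : set pt :=
  [set x + delta *: b | x in X & b in l1ball].

(* delta is an admissible radius in the infimum defining the Hausdorff distance *)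
Definition hausdorff_adm (X Y : set pt) (delta : R) : Prop :=
  0 < delta /\ X `<=` l1nbhd Y delta /\ Y `<=` l1nbhd X delta.

End Defs.

(* Main.v *)
Require Import Defs.
From HB Require Import structures.
From mathcomp Require Import all_boot all_order all_algebra.
From mathcomp Require Import all_classical all_reals all_analysis.
From mathcomp Require Import ring lra zify.
Import Order.TTheory GRing.Theory Num.Theory.
Import numFieldNormedType.Exports.
Local Open Scope classical_set_scope.
Local Open Scope ring_scope.
Set Implicit Arguments. Unset Strict Implicit. Unset Printing Implicit Defensive.

Ltac absr := repeat match goal with |- context [ Num.norm ?x ] =>
  tryif (match x with context [Num.norm _] => idtac end) then fail else
  (let h := fresh "h" in case: (lerP 0 x) => h; [rewrite (ger0_norm h) | rewrite (ltr0_norm h)]) end.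
Ltac ifs := repeat match goal with |- context [if ?a <= ?b then _ else _] =>
  let h := fresh "h" in case: (leP a b) => h end.


Lemma t1 (R : realType) (a b c : R) : `|c - a| = `|c - b| + `|b - a| -> a <= c -> a <= b <= c.
Proof. move=> H1 H2; move: H1; absr; move=> *; apply/andP; split; lra. Qed.

Definition incell (R : realType) (lam : R) (m : int) (v : R) := m%:~R * lam <= v <= m%:~R * lam + lam.

Lemma incell_floor (R : realType) (lam v : R) : 0 < lam -> incell lam (Num.floor (v / lam)) v.
Proof.
move=> hl; rewrite /incell; have := floor_le (v / lam); have := floorD1_gt (v/lam).
rewrite intrD => h1 h2; apply/andP; split.
  by rewrite -ler_pdivlMr.
have -> : (Num.floor (v / lam))%:~R * lam + lam = ((Num.floor (v / lam))%:~R + 1) * lam by ring.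
by rewrite -ler_pdivrMr // ltW.
Qed.


Definition pw (R : realType) (A B C : R -> R) (t : R) :=
  if t <= 1 then A t else if t <= 2 then B t else C t.

Lemma chain (R : realType) (a b c K u v w : R) :
  `|a - b| <= K * (v - u) -> `|b - c| <= K * (w - v) -> `|a - c| <= K * (w - u).
Proof.
have -> : K * (w - u) = K * (v - u) + K * (w - v) by ring.
move: (K * (v - u)) (K * (w - v)) => X Y; absr; lra.
Qed.

Lemma pwE1 (R : realType) (A B C : R -> R) t : t <= 1 -> pw A B C t = A t.
Proof. by rewrite /pw => ->. Qed.
Lemma pwE2 (R : realType) (A B C : R -> R) t : 1 <= t -> t <= 2 -> A 1 = B 1 -> pw A B C t = B t.
Proof.
rewrite /pw => h1 h2 e; case: (lerP t 1) => h3; last by rewrite h2.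
by have -> : t = 1 by apply/eqP; rewrite eq_le h1 h3.
Qed.
Lemma pwE3 (R : realType) (A B C : R -> R) t : 2 <= t -> B 2 = C 2 -> pw A B C t = C t.
Proof.
rewrite /pw => h1 e; case: (lerP t 1) => h3; first lra.
case: (lerP t 2) => h4 //; have -> : t = 2 by apply/eqP; rewrite eq_le h1 h4.
by [].
Qed.

Lemma pw_lip (R : realType) (A B C : R -> R) (K : R) :
  A 1 = B 1 -> B 2 = C 2 ->
  (forall t t', t <= t' -> t' <= 1 -> `|A t - A t'| <= K * (t' - t)) ->
  (forall t t', 1 <= t -> t <= t' -> t' <= 2 -> `|B t - B t'| <= K * (t' - t)) ->
  (forall t t', 2 <= t -> t <= t' -> `|C t - C t'| <= K * (t' - t)) ->
  forall t t', `|pw A B C t - pw A B C t'| <= K * `|t - t'|.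
Proof.
move=> e1 e2 hA hB hC.
suff H : forall t t', t <= t' -> `|pw A B C t - pw A B C t'| <= K * (t' - t).
  move=> t t'; case: (lerP t t') => h.
    exact: H.
  by rewrite distrC; apply: H; lra.
move=> t t' htt.
case: (lerP t 1) => h1.
  rewrite pwE1 //; case: (lerP t' 1) => h2; first by rewrite pwE1 // hA.
  case: (lerP t' 2) => h3.
    rewrite pwE2 //; try lra.
    by apply: (chain (b := B 1) (v := 1)); [rewrite -e1 hA // | apply: hB => //; lra].
  rewrite pwE3 //; try lra.
  apply: (chain (b := B 1) (v := 1)); first by rewrite -e1 hA.
  apply: (chain (b := B 2) (v := 2)); first by apply: hB => //; lra.
  by rewrite e2 hC //; lra.
case: (lerP t 2) => h3.
  rewrite pwE2 //; try lra.
  case: (lerP t' 2) => h4; first by rewrite pwE2 //; try lra; apply: hB => //; lra.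
  rewrite pwE3 //; try lra.
  apply: (chain (b := B 2) (v := 2)); first by apply: hB => //; lra.
  by rewrite e2 hC //; lra.
by rewrite !pwE3 //; try lra; apply: hC => //; lra.
Qed.

Lemma pw_mono (R : realType) (A B C : R -> R) :
  A 1 = B 1 -> B 2 = C 2 ->
  (forall t t', 0 <= t -> t <= t' -> t' <= 1 -> A t <= A t') ->
  (forall t t', 1 <= t -> t <= t' -> t' <= 2 -> B t <= B t') ->
  (forall t t', 2 <= t -> t <= t' -> t' <= 3 -> C t <= C t') ->
  forall t t', 0 <= t -> t <= t' -> t' <= 3 -> pw A B C t <= pw A B C t'.
Proof.
move=> e1 e2 hA hB hC t t' h0 htt h3'.
case: (lerP t 1) => h1.
  rewrite pwE1 //; case: (lerP t' 1) => h2; first by rewrite pwE1 // hA.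
  case: (lerP t' 2) => h3.
    rewrite pwE2 //; try lra.
    apply: (le_trans (hA t 1 _ _ _)) => //; rewrite e1; apply: hB => //; lra.
  rewrite pwE3 //; try lra.
  apply: (le_trans (hA t 1 _ _ _)) => //; rewrite e1.
  apply: (le_trans (hB 1 2 _ _ _)) => //; try lra; rewrite e2; apply: hC => //; lra.
case: (lerP t 2) => h3.
  rewrite pwE2 //; try lra.
  case: (lerP t' 2) => h4; first by rewrite pwE2 //; try lra; apply: hB => //; lra.
  rewrite pwE3 //; try lra.
  apply: (le_trans (hB t 2 _ _ _)) => //; try lra; rewrite e2; apply: hC => //; lra.
by rewrite !pwE3 //; try lra; apply: hC => //; lra.
Qed.


Definition oneD_in (R : realType) (z1 z2 D : R) (g : R -> R) :=
  [/\ g 0 = z1, g 1 = z2, 0 <= D &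
  [/\
   (forall s s', 0 <= s <= 1 -> 0 <= s' <= 1 -> `|g s - g s'| <= D * `|s - s'|),
   (forall s s', 0 <= s -> s <= s' -> s' <= 1 -> `|g s' - z1| = `|g s' - g s| + `|g s - z1|) &
   (forall s, 0 <= s <= 1 -> `|z2 - z1| = `|z2 - g s| + `|g s - z1|)]].

Definition oneD_out (R : realType) (lam : R) (m1 m2 : int) (x y : R) (g sig : R -> R) :=
  exists K : R, [/\ sig 0 = x, sig 3 = y,
   (forall t t', `|sig t - sig t'| <= K * `|t - t'|) & [/\
   (forall t t', 0 <= t -> t <= t' -> t' <= 3 -> `|sig t' - x| = `|sig t' - sig t| + `|sig t - x|),
   (forall t, 0 <= t <= 1 -> incell lam m1 (sig t)),
   (forall t, 2 <= t <= 3 -> incell lam m2 (sig t)) &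
   (forall t, 1 <= t <= 2 -> exists m, incell lam m (sig t) /\ incell lam m (g (t - 1)))]].

Lemma clamp_lip (R : realType) (x y u v : R) : x <= y ->
  `|(if u <= x then x else if y <= u then y else u) - (if v <= x then x else if y <= v then y else v)|
   <= `|u - v|.
Proof. move=> hxy; ifs; absr; lra. Qed.

Lemma cellA (R : realType) (lam : R) (m1 m2 : int) : 0 < lam -> (m1 < m2)%R ->
  m1%:~R * lam + lam <= m2%:~R * lam.
Proof.
move=> hl hm; have : (m1 + 1)%:~R <= m2%:~R :> R by rewrite ler_int lezD1.
rewrite intrD => h; nra.
Qed.

Lemma lipK (R : realType) (a b t t' : R) : 0 <= a -> 0 <= b -> t <= t' ->
  - (t - t') * a <= (a + b) * (t' - t).
Proof.
move=> ha hb htt; rewrite -subr_ge0.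
have -> : (a + b) * (t' - t) - - (t - t') * a = b * (t' - t) by ring.
by apply: mulr_ge0; lra.
Qed.

Lemma lin01 (R : realType) (t u v : R) : 0 <= t -> t <= 1 -> u <= v ->
  u <= u + t * (v - u) <= v.
Proof.
move=> h0 h1 huv.
have H1 : 0 <= t * (v - u) by apply: mulr_ge0; lra.
have H2 : 0 <= (1 - t) * (v - u) by apply: mulr_ge0; lra.
apply/andP; split; lra.
Qed.

Lemma linmono (R : realType) (t t' u v : R) : t <= t' -> u <= v ->
  u + t * (v - u) <= u + t' * (v - u).
Proof.
move=> h huv; have H : 0 <= (t' - t) * (v - u) by apply: mulr_ge0; lra.
lra.
Qed.

Lemma clamp_mono (R : realType) (x y u v : R) : x <= y -> u <= v ->
  (if u <= x then x else if y <= u then y else u) <= (if v <= x then x else if y <= v then y else v).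
Proof. move=> h1 h2; ifs; lra. Qed.

Lemma clamp_lo (R : realType) (x y v : R) : x <= y -> v <= y ->
  (if v <= x then x else if y <= v then y else v) = x + 1 * ((if x <= v then v else x) - x).
Proof. move=> h1 h2; ifs; lra. Qed.

Lemma clamp_hi (R : realType) (x y v : R) : x <= y -> x <= v ->
  (if v <= x then x else if y <= v then y else v) = (if v <= y then v else y) + (2 - 2) * (y - (if v <= y then v else y)).
Proof. move=> h1 h2; ifs; lra. Qed.

Lemma maxle (R : realType) (x z b : R) : x <= b -> z <= b -> x <= (if x <= z then z else x) <= b.
Proof. move=> h1 h2; ifs; apply/andP; split; lra. Qed.

Lemma minge (R : realType) (y z b : R) : b <= y -> b <= z -> b <= (if z <= y then z else y) <= y.
Proof. move=> h1 h2; ifs; apply/andP; split; lra. Qed.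

Lemma bet_mono (R : realType) (a u v : R) : a <= u -> a <= v ->
  `|v - a| = `|v - u| + `|u - a| -> u <= v.
Proof. move=> h1 h2; absr; lra. Qed.

Lemma bet_from_mono (R : realType) (x a b : R) : x <= a -> a <= b ->
  `|b - x| = `|b - a| + `|a - x|.
Proof. by move=> h1 h2; rewrite !ger0_norm; lra. Qed.

Lemma core_A (R : realType) (lam : R) (m1 m2 : int) (x y z1 z2 D : R) (g : R -> R) :
  0 < lam -> (m1 < m2)%R -> incell lam m1 x -> incell lam m1 z1 ->
  incell lam m2 y -> incell lam m2 z2 -> oneD_in z1 z2 D g ->
  exists sig, oneD_out lam m1 m2 x y g sig.
Proof.
rewrite /incell => hl hm /andP[x1 x2] /andP[z11 z12] /andP[y1 y2] /andP[z21 z22] [g0 g1 D0 [glip gbet gbtw]].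
have hc := cellA hl hm.
have gm : forall s, 0 <= s <= 1 -> z1 <= g s <= z2.
  by move=> s hs; apply: t1; [apply: gbtw | lra].
have gmono : forall s s', 0 <= s -> s <= s' -> s' <= 1 -> g s <= g s'.
  move=> s s' h1 h2 h3.
  have hs : 0 <= s <= 1 by apply/andP; split; lra.
  have hs' : 0 <= s' <= 1 by apply/andP; split; lra.
  have /andP[u1 u2] := gm s hs; have /andP[u3 u4] := gm s' hs'.
  apply: bet_mono (gbet s s' h1 h2 h3) => //; lra.
set p := if x <= z1 then z1 else x.
set q := if z2 <= y then z2 else y.
set c := fun v => if v <= x then x else if y <= v then y else v.
have hp : x <= p <= m1%:~R * lam + lam by apply: maxle.
have hq : m2%:~R * lam <= q <= y by apply: minge.
have hxy : x <= y by lra.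
move: hp hq => /andP[p1 p2] /andP[q1 q2].
pose A := fun t : R => x + t * (p - x).
pose B := fun t => c (g (t - 1)).
pose C := fun t : R => q + (t - 2) * (y - q).
have e1 : A 1 = B 1.
  by rewrite /A /B /c subrr g0 /p clamp_lo //; lra.
have e2 : B 2 = C 2.
  rewrite /B /C /c (_ : 2 - 1 = 1 :> R); last lra.
  by rewrite g1 /q clamp_hi //; lra.
have cm : forall u v, u <= v -> c u <= c v by move=> u v huv; exact: clamp_mono.
have mono : forall t t', 0 <= t -> t <= t' -> t' <= 3 -> pw A B C t <= pw A B C t'.
  apply: pw_mono => //.
  - by move=> t t' *; rewrite /A; apply: linmono.
  - by move=> t t' *; rewrite /B; apply: cm; apply: gmono; lra.
  - by move=> t t' *; rewrite /C; apply: linmono; lra.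
exists (pw A B C), ((p - x) + D + (y - q)); split; [| | | split].
- by rewrite pwE1 /A; [ring | lra].
- by rewrite pwE3 /C; [ring | lra | exact: e2].
- apply: pw_lip => //.
  + move=> t t' *; rewrite /A (_ : x + t * (p - x) - (x + t' * (p - x)) = (t - t') * (p - x)); last ring.
    rewrite normrM (ger0_norm (_ : 0 <= p - x)); last lra.
    rewrite ler0_norm; last lra.
    rewrite -addrA; apply: lipK; lra.
  + move=> t t' *; rewrite /B /c; apply: le_trans (clamp_lip _ _ (_ : x <= y)) _; first lra.
    apply: le_trans (glip _ _ _ _) _; try (apply/andP; split; lra).
    rewrite (_ : t - 1 - (t' - 1) = t - t'); last ring.
    rewrite ler0_norm; last lra.
    have -> : p - x + D + (y - q) = D + ((p - x) + (y - q)) by ring.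
    rewrite opprB; apply: ler_wpM2r; lra.
  + move=> t t' *; rewrite /C (_ : q + (t - 2) * (y - q) - (q + (t' - 2) * (y - q)) = (t - t') * (y - q)); last ring.
    rewrite normrM (ger0_norm (_ : 0 <= y - q)); last lra.
    rewrite ler0_norm; last lra.
    have -> : p - x + D + (y - q) = (y - q) + ((p - x) + D) by ring.
    apply: lipK; lra.
- move=> t t' h0 h1 h2.
  have s0 : pw A B C 0 = x by rewrite pwE1 /A; [ring | lra].
  have := mono 0 t (lexx _) h0 (le_trans h1 h2); rewrite s0 => u1.
  exact: bet_from_mono u1 (mono t t' h0 h1 h2).
- move=> t /andP[h0 h1]; rewrite pwE1 // /incell /A.
  have /andP[u1 u2] := lin01 h0 h1 p1; apply/andP; split; lra.
- move=> t /andP[h0 h1]; rewrite pwE3 // /incell /C.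
  have hh1 : 0 <= t - 2 by lra.
  have hh2 : t - 2 <= 1 by lra.
  have /andP[u1 u2] := lin01 hh1 hh2 q2.
  apply/andP; split; lra.
- move=> t /andP[h0 h1]; rewrite pwE2 // /B.
  have hh : 0 <= t - 1 <= 1 by apply/andP; split; lra.
  have /andP[v1 v2] := gm (t - 1) hh.
  move: (g (t - 1)) v1 v2 => v v1 v2; rewrite /c; ifs.
  + exists m1; rewrite /incell; split; apply/andP; split; lra.
  + exists m2; rewrite /incell; split; apply/andP; split; lra.
  + exists (Num.floor (v / lam)); split; exact: incell_floor.
Qed.


Lemma core_B (R : realType) (lam : R) (m1 : int) (x y z1 z2 D : R) (g : R -> R) :
  0 < lam -> x <= y -> incell lam m1 x -> incell lam m1 z1 ->
  incell lam m1 y -> incell lam m1 z2 -> oneD_in z1 z2 D g ->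
  exists sig, oneD_out lam m1 m1 x y g sig.
Proof.
rewrite /incell => hl hxy /andP[x1 x2] /andP[z11 z12] /andP[y1 y2] /andP[z21 z22] [g0 g1 D0 [glip gbet gbtw]].
pose A := fun t : R => x.
pose C := fun t : R => x + (t - 2) * (y - x).
have e2 : A 2 = C 2 by rewrite /A /C; ring.
exists (pw A A C), (y - x); split; [| | | split].
- by rewrite pwE1 /A //; lra.
- by rewrite pwE3 /C; [ring | lra | exact: e2].
- apply: pw_lip => //.
  + by move=> t t' *; rewrite /A subrr normr0; apply: mulr_ge0; lra.
  + by move=> t t' *; rewrite /A subrr normr0; apply: mulr_ge0; lra.
  + move=> t t' *; rewrite /C (_ : x + (t - 2) * (y - x) - (x + (t' - 2) * (y - x)) = (t - t') * (y - x)); last ring.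
    rewrite normrM (ger0_norm (_ : 0 <= y - x)); last lra.
    by rewrite ler0_norm; [rewrite opprB mulrC | lra].
- move=> t t' h0 h1 h2.
  have mono : forall t t', 0 <= t -> t <= t' -> t' <= 3 -> pw A A C t <= pw A A C t'.
    apply: pw_mono => //; try by move=> *; rewrite /A.
    by move=> u u' *; rewrite /C; apply: linmono; lra.
  have s0 : pw A A C 0 = x by rewrite pwE1 /A //; lra.
  have := mono 0 t (lexx _) h0 (le_trans h1 h2); rewrite s0 => u1.
  exact: bet_from_mono u1 (mono t t' h0 h1 h2).
- by move=> t /andP[h0 h1]; rewrite pwE1 // /incell /A; apply/andP; split.
- move=> t /andP[h0 h1]; rewrite pwE3 // /incell /C.
  have hh1 : 0 <= t - 2 by lra.
  have hh2 : t - 2 <= 1 by lra.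
  have /andP[u1 u2] := lin01 hh1 hh2 hxy.
  apply/andP; split; lra.
- move=> t /andP[h0 h1]; rewrite pwE2 // /A; exists m1; split.
    by rewrite /incell; apply/andP; split.
  have hh : 0 <= t - 1 <= 1 by apply/andP; split; lra.
  have := gbtw (t - 1) hh.
  move: (g (t - 1)) => v; rewrite /incell; absr => *; apply/andP; split; lra.
Qed.

Lemma normNN (R : realType) (a b : R) : `|- a - - b| = `|a - b|.
Proof. by rewrite opprK addrC distrC. Qed.

Lemma incell_neg (R : realType) (lam : R) (m : int) (v : R) :
  incell lam (- m - 1) (- v) = incell lam m v.
Proof.
rewrite /incell rmorphB rmorphN /=; move: (m%:~R : R) => M.
apply/idP/idP => /andP[h1 h2]; apply/andP; split; nra.
Qed.

Lemma oneD_in_neg (R : realType) (z1 z2 D : R) (g : R -> R) :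
  oneD_in z1 z2 D g -> oneD_in (- z1) (- z2) D (fun s => - g s).
Proof.
move=> [g0 g1 D0 [glip gbet gbtw]]; split; [by rewrite g0 | by rewrite g1 | by [] | split].
- by move=> s s' *; rewrite normNN; apply: glip.
- by move=> s s' *; rewrite !normNN; apply: gbet.
- by move=> s *; rewrite !normNN; apply: gbtw.
Qed.

Lemma oneD_out_neg (R : realType) (lam : R) (m1 m2 : int) (x y : R) (g sig : R -> R) :
  oneD_out lam (- m1 - 1) (- m2 - 1) (- x) (- y) (fun s => - g s) sig ->
  oneD_out lam m1 m2 x y g (fun t => - sig t).
Proof.
move=> [K [s0 s3 slip [sbet c1 c3 c2]]]; exists K; split; [| | | split].
- by rewrite s0 opprK.
- by rewrite s3 opprK.
- by move=> t t'; rewrite normNN.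
- move=> t t' *; rewrite -[x]opprK !normNN; exact: sbet.
- by move=> t ht; rewrite -incell_neg opprK; apply: c1.
- by move=> t ht; rewrite -incell_neg opprK; apply: c3.
- move=> t ht; have [m [h1 h2]] := c2 t ht; exists (- m - 1).
  by rewrite incell_neg -[g (t - 1)]opprK incell_neg.
Qed.

Lemma oneD (R : realType) (lam : R) (m1 m2 : int) (x y z1 z2 D : R) (g : R -> R) :
  0 < lam -> incell lam m1 x -> incell lam m1 z1 ->
  incell lam m2 y -> incell lam m2 z2 -> oneD_in z1 z2 D g ->
  exists sig, oneD_out lam m1 m2 x y g sig.
Proof.
move=> hl hx hz1 hy hz2 hg.
case: (ltgtP m1 m2) => hm.
- exact: core_A hx hz1 hy hz2 hg.
- have [sig hs] : exists sig, oneD_out lam (- m1 - 1) (- m2 - 1) (- x) (- y) (fun s => - g s) sig.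
    apply: (core_A hl _ _ _ _ _ (oneD_in_neg hg)); rewrite ?incell_neg //.
    lia.
  by exists (fun t => - sig t); apply: oneD_out_neg.
- subst m2; case: (lerP x y) => hxy; first exact: core_B hxy hx hz1 hy hz2 hg.
  have [sig hs] : exists sig, oneD_out lam (- m1 - 1) (- m1 - 1) (- x) (- y) (fun s => - g s) sig.
    apply: (core_B hl _ _ _ _ _ (oneD_in_neg hg)); rewrite ?incell_neg //.
    by rewrite lerN2 ltW.
  by exists (fun t => - sig t); apply: oneD_out_neg.
Qed.

Lemma lip_cont (R : realType) (f : R -> R) (K : R) :
  (forall t t', `|f t - f t'| <= K * `|t - t'|) -> continuous f.
Proof.
move=> hf t; apply/cvgrPdist_le => e e0.
have K1 : 0 < `|K| + 1 by rewrite ltr_pwDr // normr_ge0.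
apply/nbhs_ballP; exists (e / (`|K| + 1)) => [|s]; first by rewrite /= divr_gt0.
move=> hs; rewrite /ball_ /= in hs.
apply: (le_trans (hf t s)); apply: (le_trans (ler_wpM2r (normr_ge0 _) (ler_norm K))).
apply: (le_trans (ler_wpM2l (normr_ge0 _) (ltW hs))).
by rewrite mulrA ler_pdivrMr // mulrDr mulr1 mulrC lerDl ltW.
Qed.


Lemma l1distC (R : realType) (n : nat) (x y : 'rV[R]_n) : l1dist x y = l1dist y x.
Proof. by apply: eq_bigr => i _; rewrite distrC. Qed.

Lemma l1dist_ge0 (R : realType) (n : nat) (x y : 'rV[R]_n) : 0 <= l1dist x y.
Proof. by apply: sumr_ge0 => i _. Qed.

Lemma l1dist_xx (R : realType) (n : nat) (x : 'rV[R]_n) : l1dist x x = 0.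
Proof. by apply: big1 => i _; rewrite subrr normr0. Qed.

Lemma l1dist_eq0 (R : realType) (n : nat) (x y : 'rV[R]_n) : l1dist x y = 0 -> x = y.
Proof.
move=> /psumr_eq0P h; apply/matrixP => i j; rewrite (ord1 i).
by apply/eqP; rewrite -subr_eq0 -normr_eq0; apply/eqP; apply: h.
Qed.

Lemma mono_geod (R : realType) (n : nat) (P : set 'rV[R]_n) (x y : 'rV[R]_n)
    (sig : R -> 'rV[R]_n) (K : R) :
  sig 0 = x -> sig 3 = y ->
  (forall t, 0 <= t <= 3 -> P (sig t)) ->
  (forall i t t', `|sig t 0 i - sig t' 0 i| <= K * `|t - t'|) ->
  (forall i t t', 0 <= t -> t <= t' -> t' <= 3 ->
     `|sig t' 0 i - x 0 i| = `|sig t' 0 i - sig t 0 i| + `|sig t 0 i - x 0 i|) ->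
  exists gamma : R -> 'rV[R]_n,
    [/\ gamma 0 = x, gamma (l1dist x y) = y,
        (forall t, 0 <= t <= l1dist x y -> P (gamma t)) &
        (forall t t', 0 <= t <= l1dist x y -> 0 <= t' <= l1dist x y ->
              l1dist (gamma t) (gamma t') = `|t - t'|)].
Proof.
move=> s0 s3 hP hlip hbet.
set D := l1dist x y.
pose S t := l1dist (sig t) x.
have Sadd : forall t t', 0 <= t -> t <= t' -> t' <= 3 -> S t' = l1dist (sig t') (sig t) + S t.
  by move=> t t' *; rewrite /S /l1dist -big_split; apply: eq_bigr => i _; apply: hbet.
have S0 : S 0 = 0 by rewrite /S s0 l1dist_xx.
have S3 : S 3 = D by rewrite /S s3 l1distC.
have D0 : 0 <= D by apply: l1dist_ge0.
have Scont : continuous S.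
  apply: (@lip_cont _ _ (K *+ n)) => t t'.
  rewrite /S /l1dist -sumrB; apply: (le_trans (ler_norm_sum _ _ _)).
  apply: le_trans (_ : \sum_(i < n) K * `|t - t'| <= _); last by rewrite sumr_const card_ord mulrnAl.
  apply: ler_sum => i _; apply: le_trans (ler_dist_dist _ _) _.
  by rewrite (_ : sig t 0 i - x 0 i - (sig t' 0 i - x 0 i) = sig t 0 i - sig t' 0 i) ?hlip //; ring.
have Sw : {within `[0, 3], continuous S} by apply: continuous_subspaceT.
have ex : forall u, exists tau, 0 <= u <= D -> 0 <= tau <= 3 /\ S tau = u.
  move=> u; case hu : (0 <= u <= D); last by exists 0.
  have h03 : (0:R) <= 3 by lra.
  have hmm : Num.min (S 0) (S 3) <= u <= Num.max (S 0) (S 3) by rewrite S0 S3 min_l // max_r.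
  have [c hc hSc] := IVT h03 Sw hmm.
  by exists c => _; split => //; move: hc; rewrite in_itv.
have [f hf] := choice ex.
have fP : forall u, 0 <= u <= D -> 0 <= f u <= 3 /\ S (f u) = u by move=> u hu; exact: hf.
exists (fun u => sig (f u)); split.
- have h00 : (0:R) <= 0 <= D by apply/andP; split.
  have [h1 h2] := fP 0 h00.
  exact: l1dist_eq0 h2.
- have h00 : (0:R) <= D <= D by apply/andP; split.
  have [/andP[h1 h2] h3] := fP D h00.
  have := Sadd (f D) 3 h1 h2 (lexx _); rewrite h3 S3 => e.
  have e2 : l1dist (sig 3) (sig (f D)) = 0 by lra.
  by rewrite -s3 (l1dist_eq0 e2).
- by move=> t ht; have [h1 _] := fP t ht; apply: hP.
- move=> t t' ht ht'.
  have [/andP[h1 h2] h3] := fP t ht; have [/andP[h1' h2'] h3'] := fP t' ht'.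
  case: (lerP (f t) (f t')) => hff.
    have := Sadd (f t) (f t') h1 hff h2'; rewrite h3 h3' l1distC => e.
    have := l1dist_ge0 (sig (f t')) (sig (f t)); rewrite -l1distC.
    move: (l1dist (sig (f t)) (sig (f t'))) e => d e hd; absr; lra.
  have := Sadd (f t') (f t) h1' (ltW hff) h2; rewrite h3 h3' => e.
  have := l1dist_ge0 (sig (f t)) (sig (f t')).
  move: (l1dist (sig (f t)) (sig (f t'))) e => d e hd; absr; lra.
Qed.

Definition Good (R : realType) (n : nat) (Z : set 'rV[R]_n) (lam : R) (m : 'I_n -> int) :=
  exists z, Z z /\ forall i, incell lam (m i) (z 0 i).

Definition Pset (R : realType) (n : nat) (Z : set 'rV[R]_n) (lam : R) : set 'rV[R]_n :=
  [set x | exists m, (forall i, incell lam (m i) (x 0 i)) /\ Good Z lam m].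

Lemma coord_le_l1 (R : realType) (n : nat) (x y : 'rV[R]_n) i :
  `|x 0 i - y 0 i| <= l1dist x y.
Proof.
rewrite /l1dist (bigD1 i) //= lerDl; exact: sumr_ge0.
Qed.

Lemma l1_bet (R : realType) (n : nat) (a b c : 'rV[R]_n) :
  l1dist c a = l1dist c b + l1dist b a ->
  forall i, `|c 0 i - a 0 i| = `|c 0 i - b 0 i| + `|b 0 i - a 0 i|.
Proof.
rewrite /l1dist -big_split /= => e.
have e2 : \sum_(i < n) (`|c 0 i - b 0 i| + `|b 0 i - a 0 i| - `|c 0 i - a 0 i|) = 0.
  by rewrite sumrB e subrr.
have := (psumr_eq0P _ e2) => h i; apply/eqP; rewrite eq_sym -subr_eq0; apply/eqP; apply: h => //.
move=> j _; rewrite subr_ge0.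
by rewrite (_ : c 0 j - a 0 j = (c 0 j - b 0 j) + (b 0 j - a 0 j)) ?ler_normD //; ring.
Qed.

Lemma Pconvex (R : realType) (n : nat) (Z : set 'rV[R]_n) (lam : R) :
  0 < lam -> l1_convex Z -> l1_convex (Pset Z lam).
Proof.
move=> hl hZ x y [m1 [hx [z1 [Zz1 hz1]]]] [m2 [hy [z2 [Zz2 hz2]]]].
have [gam [g0 gD gZ giso]] := hZ z1 z2 Zz1 Zz2.
move: gam g0 gD gZ giso; set D := l1dist z1 z2 => gam g0 gD gZ giso.
have D0 : 0 <= D by apply: l1dist_ge0.
have hin : forall i, oneD_in (z1 0 i) (z2 0 i) D (fun s => gam (D * s) 0 i).
  have r01 : forall s, 0 <= s <= 1 -> 0 <= D * s <= D.
    move=> s /andP[s0 s1]; apply/andP; split; first exact: mulr_ge0.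
    by rewrite -{2}[D]mulr1; apply: ler_wpM2l.
  move=> i; split; [by rewrite mulr0 g0 | by rewrite mulr1 gD | by [] | split].
  - move=> s s' hs hs'; apply: le_trans (coord_le_l1 _ _ i) _.
    by rewrite giso ?r01 // -mulrBr normrM ger0_norm.
  - move=> s s' h0 h1 h2.
    have hs : 0 <= s <= 1 by apply/andP; split; lra.
    have hs' : 0 <= s' <= 1 by apply/andP; split; lra.
    have z1e : z1 = gam 0 by rewrite g0.
    apply: (l1_bet (a := z1)); rewrite z1e.
    have h00 : (0:R) <= 0 <= D by apply/andP; split.
    rewrite !giso ?r01 //.
    have : D * s <= D * s' by apply: ler_wpM2l.
    have /andP[u1 u2] := r01 s hs; have /andP[u3 u4] := r01 s' hs'.
    move: (D * s) (D * s') u1 u2 u3 u4 => a b *; absr; lra.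
  - move=> s hs.
    have z1e : z1 = gam 0 by rewrite g0.
    have z2e : z2 = gam D by rewrite gD.
    apply: (l1_bet (a := z1) (c := z2)); rewrite z1e z2e.
    have h00 : (0:R) <= 0 <= D by apply/andP; split.
    have hDD : (0:R) <= D <= D by apply/andP; split.
    rewrite !giso ?r01 //.
    have /andP[u1 u2] := r01 s hs.
    move: (D * s) u1 u2 => a *; absr; lra.
have ex : forall i, exists sK : (R -> R) * R,
    let sig := sK.1 in let K := sK.2 in
    [/\ sig 0 = x 0 i, sig 3 = y 0 i,
     (forall t t', `|sig t - sig t'| <= K * `|t - t'|) & [/\
     (forall t t', 0 <= t -> t <= t' -> t' <= 3 -> `|sig t' - x 0 i| = `|sig t' - sig t| + `|sig t - x 0 i|),
     (forall t, 0 <= t <= 1 -> incell lam (m1 i) (sig t)),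
     (forall t, 2 <= t <= 3 -> incell lam (m2 i) (sig t)) &
     (forall t, 1 <= t <= 2 -> exists m, incell lam m (sig t) /\ incell lam m (gam (D * (t - 1)) 0 i))]].
  move=> i; have [sig [K hs]] := oneD hl (hx i) (hz1 i) (hy i) (hz2 i) (hin i).
  by exists (sig, K).
have [F hF] := choice ex.
pose Kt := \sum_(i < n) `|(F i).2|.
have hK : forall i, (F i).2 <= Kt.
  move=> i; apply: le_trans (ler_norm _) _; rewrite /Kt (bigD1 i) //= lerDl; exact: sumr_ge0.
pose sig := fun t => \row_(i < n) (F i).1 t.
have sigE : forall t i, sig t 0 i = (F i).1 t by move=> t i; rewrite /sig mxE.
have [e0 e3] : sig 0 = x /\ sig 3 = y.
  split; apply/matrixP => a i; rewrite (ord1 a) sigE; by have [] := hF i.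
apply: (mono_geod (sig := sig) (K := Kt) e0 e3).
- move=> t /andP[t0 t3].
  case: (lerP t 1) => h1.
    exists m1; split; last by exists z1.
    move=> i; rewrite sigE; have [_ _ _ [_ c1 _ _]] := hF i; apply: c1; apply/andP; split; lra.
  case: (lerP 2 t) => h2.
    exists m2; split; last by exists z2.
    move=> i; rewrite sigE; have [_ _ _ [_ _ c3 _]] := hF i; apply: c3; apply/andP; split; lra.
  have ht : 1 <= t <= 2 by apply/andP; split; lra.
  have exm : forall i, exists m, incell lam m ((F i).1 t) /\ incell lam m (gam (D * (t - 1)) 0 i).
    by move=> i; have [_ _ _ [_ _ _ c2]] := hF i; apply: c2.
  have [m hm] := choice exm.
  exists m; split; first by move=> i; rewrite sigE; have [] := hm i.
  exists (gam (D * (t - 1))); split; last by move=> i; have [] := hm i.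
  apply: gZ; apply/andP; split; first by apply: mulr_ge0; lra.
  by rewrite -{2}[D]mulr1; apply: ler_wpM2l => //; lra.
- move=> i t t'; rewrite !sigE; have [_ _ hl' _] := hF i.
  apply: le_trans (hl' t t') _; apply: ler_wpM2r => //; exact: hK.
- move=> i t t' h0 h1 h2; rewrite !sigE; have [_ _ _ [hb _ _ _]] := hF i; exact: hb.
Qed.


Lemma pix1 (R : realType) (lam M q : R) : 0 < lam -> `|q| <= 2^-1 ->
  M * lam <= lam * (M + 2^-1 + q) <= M * lam + lam.
Proof.
move=> hl hq.
have hq' : - 2^-1 <= q <= 2^-1 by rewrite -ler_norml.
move: hq' => /andP[q1 q2].
have a1 : 0 <= lam * (2^-1 + q) by apply: mulr_ge0; lra.
have a2 : 0 <= lam * (2^-1 - q) by apply: mulr_ge0; lra.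
have e : lam * (M + 2^-1 + q) = M * lam + lam * (2^-1 + q) by ring.
have e2 : lam * (2^-1 + q) + lam * (2^-1 - q) = lam by field.
rewrite e; apply/andP; split; lra.
Qed.

Lemma pix2 (R : realType) (lam M v : R) : 0 < lam -> M * lam <= v <= M * lam + lam ->
  `|lam^-1 * v - (M + 2^-1)| <= 2^-1.
Proof.
move=> hl /andP[h1 h2].
have e : v = (lam^-1 * v) * lam by rewrite mulrC mulrA mulfV ?mul1r // gt_eqF.
rewrite e in h1 h2; move: (lam^-1 * v) h1 h2 => w.
have -> : M * lam + lam = (M + 1) * lam by ring.
rewrite !ler_pM2r // => h1 h2.
rewrite ler_norml; apply/andP; split; lra.
Qed.

Lemma pixel_incell (R : realType) (n : nat) (lam : R) (m : 'I_n -> int) (x : 'rV[R]_n) :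
  0 < lam ->
  pixel lam (\row_i ((m i)%:~R + 2^-1)) x <-> forall i, incell lam (m i) (x 0 i).
Proof.
move=> hl; split.
  move=> [q hq <-] i; rewrite !mxE /incell; exact: pix1.
move=> h; exists (lam^-1 *: x - \row_i ((m i)%:~R + 2^-1)).
  move=> i; rewrite !mxE; exact: (pix2 hl (h i)).
by rewrite addrC subrK scalerA mulfV ?scale1r // gt_eqF.
Qed.

Lemma norm_coord (R : realType) (n : nat) (z : 'rV[R]_n) i : `|z 0 i| <= `|z|.
Proof.
rewrite [X in _ <= X]/Num.norm /= mx_normrE.
exact: (le_bigmax 0 (fun ij : 'I_1 * 'I_n => `|z ij.1 ij.2|) (0, i)).
Qed.

Lemma good_bound (R : realType) (n : nat) (Z : set 'rV[R]_n) (lam M : R) (N : nat) m :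
  0 < lam -> (forall z, Z z -> forall i, `|z 0 i| <= M) -> M / lam + 1 <= N%:R ->
  Good Z lam m -> forall i, - (N%:Z) <= m i <= N%:Z.
Proof.
move=> hl hM hN [z [Zz hz]] i.
have := hz i; have := hM z Zz i; rewrite /incell.
have e : M = (M / lam) * lam by rewrite divfK // gt_eqF.
rewrite e; move: (M / lam) hN => w hN.
move: (z 0 i) => v hv /andP[h1 h2].
have h3 : (m i)%:~R * lam <= w * lam by move: hv; absr; lra.
have h4 : - w * lam <= ((m i)%:~R + 1) * lam.
  rewrite mulrDl mul1r; move: hv; absr => *; rewrite mulNr; lra.
rewrite ler_pM2r // in h3; rewrite ler_pM2r // in h4.
have a1 : (m i)%:~R <= (N%:Z)%:~R :> R by rewrite /=; lra.
have a2 : (- (N%:Z))%:~R <= (m i)%:~R :> R by rewrite rmorphN /=; lra.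
by rewrite ler_int in a1; rewrite ler_int in a2; rewrite a1 a2.
Qed.

Definition mof (N n : nat) (f : {ffun 'I_n -> 'I_(N.*2.+1)}) (i : 'I_n) : int :=
  (f i : nat)%:Z - N%:Z.

Definition hvec (R : realType) (N n : nat) (f : {ffun 'I_n -> 'I_(N.*2.+1)}) : 'rV[R]_n :=
  \row_i ((mof f i)%:~R + 2^-1).

Definition plist (R : realType) (n : nat) (Z : set 'rV[R]_n) (lam : R) (N : nat) : seq 'rV[R]_n :=
  [seq hvec R f | f <- enum {ffun 'I_n -> 'I_(N.*2.+1)} & `[< Good Z lam (mof f) >]].

Lemma Pset_eq (R : realType) (n : nat) (Z : set 'rV[R]_n) (lam M : R) (N : nat) :
  0 < lam -> (forall z, Z z -> forall i, `|z 0 i| <= M) -> M / lam + 1 <= N%:R ->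
  Pset Z lam = [set x | exists2 h, h \in plist Z lam N & pixel lam h x].
Proof.
move=> hl hM hN; apply/seteqP; split => x.
- move=> [m [hx hg]].
  have hb := good_bound hl hM hN hg.
  pose f := [ffun i => inord (absz (m i + N%:Z)) : 'I_(N.*2.+1)].
  have hf : mof f = m.
    apply/funext => i; have /andP[b1 b2] := hb i.
    rewrite /mof ffunE inordK; lia.
  exists (hvec R f).
    apply: map_f; rewrite mem_filter mem_enum andbT hf; exact/asboolP.
  by rewrite /hvec; apply/pixel_incell => //; rewrite hf.
- move=> [h /mapP [f hfin ->] hpix].
  move: hfin; rewrite mem_filter => /andP[/asboolP hg _].
  by exists (mof f); split => //; apply/(pixel_incell _ _ hl).
Qed.


Unset Implicit Arguments.

Theorem theorem3p2 (R : realType) (n : nat) (Z : set 'rV[R]_n) :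
  compact Z -> l1_convex Z ->
  forall eps : R, 0 < eps ->
  exists P : set 'rV[R]_n,
    [/\ pixellated P, l1_convex P &
        exists delta : R, delta < eps /\ hausdorff_adm Z P delta].
Proof.
move=> cZ cvxZ eps he.
have [M0 M0pos hM0] := ex_strict_bound_gt0 (compact_bounded cZ).
have hM : forall z, Z z -> forall i, `|z 0 i| <= M0.
  by move=> z Zz i; apply: le_trans (norm_coord z i) _; apply: ltW; apply: hM0.
pose del := eps / 2.
have hd : 0 < del by rewrite /del; lra.
pose lam := del / (n.+1)%:R.
have hl : 0 < lam by rewrite /lam divr_gt0 // ltr0n.
pose N := (Num.truncn (M0 / lam + 1)).+1.
have hN : M0 / lam + 1 <= N%:R by apply: ltW; apply: truncnS_gt.
exists (Pset Z lam); split.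
- exists lam => //; exists (plist Z lam N); split.
    by move=> h /mapP [f _ ->] i; rewrite mxE; exists (mof f i).
  exact: Pset_eq hl hM hN.
- exact: Pconvex.
- exists del; split; first by rewrite /del; lra.
  split => //; split.
  + move=> z Zz; exists z.
      exists (fun i => Num.floor (z 0 i / lam)); split; first by move=> i; apply: incell_floor.
      by exists z; split => // i; apply: incell_floor.
    exists 0; last by rewrite scaler0 addr0.
    by rewrite /l1ball /= l1dist_xx ler01.
  + move=> p [m [hp [z [Zz hz]]]]; exists z => //.
    exists (del^-1 *: (p - z)); last first.
      by rewrite scalerA mulfV ?scale1r ?gt_eqF // addrC subrK.
    rewrite /l1ball /= /l1dist.
    have bnd : forall i : 'I_n, `|(del^-1 *: (p - z)) 0 i - (0 : 'rV[R]_n) 0 i| <= del^-1 * lam.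
      have di : 0 <= del^-1 by rewrite invr_ge0 ltW.
      move=> i; rewrite !mxE subr0 normrM (ger0_norm di).
      apply: ler_wpM2l => //.
      have := hp i; have := hz i; rewrite /incell => /andP[a1 a2] /andP[a3 a4].
      absr; lra.
    apply: le_trans (ler_sum _ (fun i _ => bnd i)) _.
    rewrite sumr_const card_ord /lam mulrA mulVf ?gt_eqF // mul1r.
    rewrite -[X in X <= 1]mulr_natl ler_pdivrMr ?ltr0n // mul1r ler_nat; exact: leqnSn.
Qed.
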